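(* Let $p\geq 2$ be an integer and $r=2^{1/(p-1)}$. Then $\mathcal{M}_3^p\subseteq\overline{\mathbf{D_3}}(0;r,r)$, where $\overline{\mathbf{D_3}}(0;r,r)=\{\zeta_1\gamma_2+\zeta_2\overline{\gamma}_2 : \zeta_1,\zeta_2\in\mathbb{M}(2),\ \|\zeta_1\|_2\leq r,\ \|\zeta_2\|_2\leq r\}$.
   Context: The tricomplex numbers $\mathbb{M}(3)$ form the commutative real algebra generated by commuting units $\mathbf{i_1},\mathbf{i_2},\mathbf{i_3}$ with $\mathbf{i_k}^2=-1$; set $\mathbf{j_1}=\mathbf{i_1}\mathbf{i_2}$, $\mathbf{j_2}=\mathbf{i_1}\mathbf{i_3}$, $\mathbf{j_3}=\mathbf{i_2}\mathbf{i_3}$, $\mathbf{i_4}=\mathbf{i_1}\mathbf{i_2}\mathbf{i_3}$. It has real basis $1,\mathbf{i_1},\mathbf{i_2},\mathbf{i_3},\mathbf{i_4},\mathbf{j_1},\mathbf{j_2},\mathbf{j_3}$ and norm $\|\cdot\|_3$ equal to the Euclidean norm of the 8 real coordinates. The bicomplex numbers $\mathbb{M}(2)$ are the subalgebra spanned by $1,\mathbf{i_1},\mathbf{i_2},\mathbf{j_1}$, with norm $\|\cdot\|_2$ the Euclidean norm of its 4 coordinates. $\gamma_2=\frac{1+\mathbf{j_3}}{2}$, $\overline{\gamma}_2=\frac{1-\mathbf{j_3}}{2}$. For $c\in\mathbb{M}(3)$, $Q_{p,c}(\eta)=\eta^p+c$, $Q_{p,c}^m$ its $m$-fold iterate, and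 $\mathcal{M}_3^p=\{c\in\mathbb{M}(3) : (Q_{p,c}^m(0))_{m\geq1}\text{ is bounded in }\|\cdot\|_3\}$. *)

(* Defs.v *)
From Stdlib Require Import Reals Lra.
Open Scope R_scope.

(* Tricomplex numbers built by the standard iterated (Cayley-Dickson-like,
   commutative) construction:
     C    = R x R      : a + b i1
     M(2) = C x C      : w1 + w2 i2       (bicomplex numbers)
     M(3) = M(2) x M(2): z1 + z2 i3       (tricomplex numbers)
   With z2 = a + b i1 + c i2 + d j1, z2 i3 = a i3 + b j2 + c j3 + d i4, so the
   8 real coordinates are exactly the coordinates in the basis
   1,i1,i2,j1,i3,j2,j3,i4. *)

Definition Cx : Type := (R * R)%type.
Definition C0 : Cx := (0, 0).
Definition C1 : Cx := (1, 0).
Definition Cadd (x y : Cx) : Cx := (fst x + fst y, snd x + snd y).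
Definition Copp (x : Cx) : Cx := (- fst x, - snd x).
Definition Cmul (x y : Cx) : Cx :=
  (fst x * fst y - snd x * snd y, fst x * snd y + snd x * fst y).
Definition Csq (x : Cx) : R := fst x ^ 2 + snd x ^ 2.

Definition M2 : Type := (Cx * Cx)%type.
Definition M2zero : M2 := (C0, C0).
Definition M2one : M2 := (C1, C0).
Definition M2add (x y : M2) : M2 := (Cadd (fst x) (fst y), Cadd (snd x) (snd y)).
Definition M2opp (x : M2) : M2 := (Copp (fst x), Copp (snd x)).
Definition M2mul (x y : M2) : M2 :=
  (Cadd (Cmul (fst x) (fst y)) (Copp (Cmul (snd x) (snd y))),
   Cadd (Cmul (fst x) (snd y)) (Cmul (snd x) (fst y))).
Definition M2sq (x : M2) : R := Csq (fst x) + Csq (snd x).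
Definition norm2 (x : M2) : R := sqrt (M2sq x).

Definition M3 : Type := (M2 * M2)%type.
Definition M3zero : M3 := (M2zero, M2zero).
Definition M3one : M3 := (M2one, M2zero).
Definition M3add (x y : M3) : M3 := (M2add (fst x) (fst y), M2add (snd x) (snd y)).
Definition M3mul (x y : M3) : M3 :=
  (M2add (M2mul (fst x) (fst y)) (M2opp (M2mul (snd x) (snd y))),
   M2add (M2mul (fst x) (snd y)) (M2mul (snd x) (fst y))).
Definition norm3 (x : M3) : R := sqrt (M2sq (fst x) + M2sq (snd x)).

Definition M2toM3 (z : M2) : M3 := (z, M2zero).

(* j3 = i2 i3 ; in M(2), i2 = (0, 1) *)
Definition i2_M2 : M2 := (C0, C1).
Definition j3 : M3 := (M2zero, i2_M2).
Definition half : M3 := ((( / 2, 0), C0), M2zero).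
Definition gamma2 : M3 := M3mul half (M3add M3one j3).
Definition gamma2bar : M3 :=
  M3mul half (M3add M3one (M3mul ((M2opp M2one), M2zero) j3)).

Fixpoint M3pow (x : M3) (n : nat) : M3 :=
  match n with
  | O => M3one
  | S k => M3mul x (M3pow x k)
  end.

Definition Q (p : nat) (c : M3) (eta : M3) : M3 := M3add (M3pow eta p) c.

Definition Qiter (p : nat) (c : M3) (m : nat) : M3 := Nat.iter m (Q p c) M3zero.

Definition Mandel3 (p : nat) (c : M3) : Prop :=
  exists B : R, forall m : nat, (1 <= m)%nat -> norm3 (Qiter p c m) <= B.

Definition closedDisk3 (r1 r2 : R) (c : M3) : Prop :=
  exists z1 z2 : M2, norm2 z1 <= r1 /\ norm2 z2 <= r2 /\
    c = M3add (M3mul (M2toM3 z1) gamma2) (M3mul (M2toM3 z2) gamma2bar).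

(* Main.v *)
From Pilot Require Import Defs.
From Stdlib Require Import Reals Lra Psatz.
From Coquelicot Require Import Coquelicot.
Import Pilot.Defs.
Open Scope R_scope.

Fixpoint Cpw (x : Cx) (n : nat) : Cx :=
  match n with O => C1 | S k => Cmul x (Cpw x k) end.

Definition citer (p : nat) (c : Cx) (m : nat) : Cx :=
  Nat.iter m (fun z => Cadd (Cpw z p) c) C0.

Lemma Cmod_Cpw x n : Cmod (Cpw x n) = Cmod x ^ n.
Proof.
  induction n as [|n IH]; simpl.
  - unfold Cmod, C1; cbn [fst snd]. replace (1 ^ 2 + 0 ^ 2) with 1 by ring. apply sqrt_1.
  - change (Cmul x (Cpw x n)) with (Cmult x (Cpw x n)).
    rewrite Cmod_mult, IH. reflexivity.
Qed.

Lemma Cmod_rev x y : Cmod x - Cmod y <= Cmod (Cadd x y).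
Proof.
  assert (H := Cmod_triangle (Cadd x y) (Copp y)).
  assert (E1 : Cplus (Cadd x y) (Copp y) = x).
  { destruct x, y; unfold Cplus, Cadd, Copp; simpl; f_equal; ring. }
  assert (E2 : Cmod (Copp y) = Cmod y).
  { destruct y; unfold Cmod, Copp; simpl; f_equal; ring. }
  rewrite E1, E2 in H. lra.
Qed.

Lemma citer_S p c m : citer p c (S m) = Cadd (Cpw (citer p c m) p) c.
Proof. reflexivity. Qed.

Lemma Cmod_rev' x y : Cmod y - Cmod x <= Cmod (Cadd x y).
Proof.
  replace (Cadd x y) with (Cadd y x) by (destruct x, y; unfold Cadd; simpl; f_equal; ring).
  apply Cmod_rev.
Qed.

Lemma escape p c : (2 <= p)%nat -> 2 < Cmod c ^ (p - 1) ->
  forall B, exists m, (1 <= m)%nat /\ B < Cmod (citer p c m).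
Proof.
  intros Hp Hc B.
  set (a := Cmod c) in *.
  destruct p as [|q]; [lia|].
  replace (S q - 1)%nat with q in Hc by lia.
  destruct q as [|q']; [lia|].
  assert (Ha0 : 0 <= a) by apply Cmod_ge_0.
  assert (Ha : 0 < a).
  { destruct (Req_dec a 0) as [E|E]; [|lra].
    rewrite E in Hc. simpl in Hc. lra. }
  set (q := S q') in *.
  set (l := a ^ q - 1).
  assert (Hl : 1 < l) by (unfold l; lra).
  assert (Key : forall n, a * l ^ n <= Cmod (citer (S q) c (S n))).
  { induction n as [|n IH].
    - rewrite citer_S. change (citer (S q) c 0) with C0. simpl pow.
      assert (H := Cmod_rev' (Cpw C0 (S q)) c).
      rewrite Cmod_Cpw in H.
      assert (Cmod C0 = 0) as E.
      { unfold Cmod, C0; cbn [fst snd]. replace (0 ^ 2 + 0 ^ 2) with 0 by ring. apply sqrt_0. }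
      rewrite E in H. change (Cmod c) with a in H. assert (Z : 0 ^ S q = 0) by (simpl; ring). rewrite Z in H. lra.
    - rewrite citer_S.
      set (w := citer (S q) c (S n)) in *.
      assert (H := Cmod_rev (Cpw w (S q)) c).
      rewrite Cmod_Cpw in H. fold a in H.
      assert (Hln : 1 <= l ^ n) by (apply pow_R1_Rle; lra).
      assert (Hw : a <= Cmod w) by nra.
      assert (Hpw : a ^ q <= Cmod w ^ q) by (apply pow_incr; lra).
      change (Cmod w ^ S q) with (Cmod w * Cmod w ^ q) in H.
      assert (A0 : Cmod w * a ^ q <= Cmod w * Cmod w ^ q) by (apply Rmult_le_compat_l; lra).
      assert (A1 : a * l ^ n * l <= Cmod w * l) by (apply Rmult_le_compat_r; lra).
      assert (A2 : a * l ^ S n = a * l ^ n * l) by (simpl; ring).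
      assert (A3 : Cmod w * l = Cmod w * a ^ q - Cmod w) by (unfold l; ring).
      rewrite A2.
      set (Cw := Cmod w) in *. set (X := Cw * a ^ q) in *. set (Y := Cw * Cw ^ q) in *.
      set (T := a * l ^ n * l) in *. set (U := Cw * l) in *.
      lra. }
  destruct (Pow_x_infinity l) with (b := B / a + 1) as [N HN].
  { rewrite Rabs_right; lra. }
  specialize (HN N (Nat.le_refl _)).
  rewrite Rabs_right in HN by (apply Rle_ge, pow_le; lra).
  exists (S N). split; [lia|].
  specialize (Key N).
  assert (a * (B / a + 1) <= a * l ^ N) by (apply Rmult_le_compat_l; lra).
  assert (a * (B / a + 1) = B + a) by (field; lra).
  lra.
Qed.

Definition sg (b : bool) : R := if b then 1 else -1.

Definition phi (s t : bool) (x : M3) : Cx :=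
  let a := fst (fst x) in let b := snd (fst x) in
  let c := fst (snd x) in let d := snd (snd x) in
  (fst a - sg s * snd b - sg t * snd c - sg s * sg t * fst d,
   snd a + sg s * fst b + sg t * fst c - sg s * sg t * snd d).

Lemma phi_mul s t x y : phi s t (M3mul x y) = Cmul (phi s t x) (phi s t y).
Proof.
  destruct x as [[[a1 a2][b1 b2]][[c1 c2][d1 d2]]].
  destruct y as [[[e1 e2][f1 f2]][[g1 g2][h1 h2]]].
  destruct s, t; unfold phi, M3mul, M2mul, M2add, M2opp, Cmul, Cadd, Copp, sg; simpl;
    f_equal; ring.
Qed.

Lemma phi_add s t x y : phi s t (M3add x y) = Cadd (phi s t x) (phi s t y).
Proof.
  destruct x as [[[a1 a2][b1 b2]][[c1 c2][d1 d2]]].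
  destruct y as [[[e1 e2][f1 f2]][[g1 g2][h1 h2]]].
  unfold phi, M3add, M2add, Cadd; simpl; f_equal; ring.
Qed.

Lemma phi_one s t : phi s t M3one = C1.
Proof. unfold phi, M3one, M2one, M2zero, C1, C0; simpl; f_equal; ring. Qed.

Lemma phi_zero s t : phi s t M3zero = C0.
Proof. unfold phi, M3zero, M2zero, C0; simpl; f_equal; ring. Qed.

Lemma phi_pow s t x n : phi s t (M3pow x n) = Cpw (phi s t x) n.
Proof.
  induction n as [|n IH]; simpl.
  - apply phi_one.
  - rewrite phi_mul, IH. reflexivity.
Qed.

Lemma phi_iter s t p c m : phi s t (Qiter p c m) = citer p (phi s t c) m.
Proof.
  induction m as [|m IH].
  - apply phi_zero.
  - unfold Qiter, citer in *. simpl Nat.iter. unfold Q at 1.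
    rewrite phi_add, phi_pow, IH. reflexivity.
Qed.

Lemma sq4 x1 x2 x3 x4 : (x1 + x2 + x3 + x4) ^ 2 <= 4 * (x1^2 + x2^2 + x3^2 + x4^2).
Proof.
  pose proof (Rle_0_sqr (x1 - x2)); pose proof (Rle_0_sqr (x1 - x3));
  pose proof (Rle_0_sqr (x1 - x4)); pose proof (Rle_0_sqr (x2 - x3));
  pose proof (Rle_0_sqr (x2 - x4)); pose proof (Rle_0_sqr (x3 - x4)).
  unfold Rsqr in *. nra.
Qed.

Lemma phi_bound s t x : Cmod (phi s t x) <= 2 * norm3 x.
Proof.
  unfold Cmod, norm3.
  replace 2 with (sqrt (2 * 2)) at 1 by (apply sqrt_square; lra).
  rewrite <- sqrt_mult_alt by lra.
  apply sqrt_le_1_alt.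
  destruct x as [[[a1 a2][b1 b2]][[c1 c2][d1 d2]]].
  assert (Hs : sg s * sg s = 1) by (destruct s; simpl; ring).
  assert (Ht : sg t * sg t = 1) by (destruct t; simpl; ring).
  pose proof (sq4 a1 (-(sg s*b2)) (-(sg t*c2)) (-(sg s*sg t*d1))) as P1.
  pose proof (sq4 a2 (sg s*b1) (sg t*c1) (-(sg s*sg t*d2))) as P2.
  unfold phi, M2sq, Csq; cbn [fst snd].
  assert (E1 : (- (sg s * b2)) ^ 2 = b2 ^ 2) by (replace ((- (sg s * b2)) ^ 2) with ((sg s * sg s) * b2^2) by ring; rewrite Hs; ring).
  assert (E2 : (- (sg t * c2)) ^ 2 = c2 ^ 2) by (replace ((- (sg t * c2)) ^ 2) with ((sg t * sg t) * c2^2) by ring; rewrite Ht; ring).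
  assert (E3 : (- (sg s * sg t * d1)) ^ 2 = d1 ^ 2) by (replace ((- (sg s * sg t * d1)) ^ 2) with ((sg s * sg s) * (sg t * sg t) * d1^2) by ring; rewrite Hs, Ht; ring).
  assert (E4 : (sg s * b1) ^ 2 = b1 ^ 2) by (replace ((sg s * b1) ^ 2) with ((sg s * sg s) * b1^2) by ring; rewrite Hs; ring).
  assert (E5 : (sg t * c1) ^ 2 = c1 ^ 2) by (replace ((sg t * c1) ^ 2) with ((sg t * sg t) * c1^2) by ring; rewrite Ht; ring).
  assert (E6 : (- (sg s * sg t * d2)) ^ 2 = d2 ^ 2) by (replace ((- (sg s * sg t * d2)) ^ 2) with ((sg s * sg s) * (sg t * sg t) * d2^2) by ring; rewrite Hs, Ht; ring).
  rewrite E1, E2, E3 in P1. rewrite E4, E5, E6 in P2.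
  replace (a1 - sg s * b2 - sg t * c2 - sg s * sg t * d1) with (a1 + - (sg s * b2) + - (sg t * c2) + - (sg s * sg t * d1)) by ring.
  replace (a2 + sg s * b1 + sg t * c1 - sg s * sg t * d2) with (a2 + sg s * b1 + sg t * c1 + - (sg s * sg t * d2)) by ring.
  set (u := (a1 + - (sg s * b2) + - (sg t * c2) + - (sg s * sg t * d1))) in *.
  set (v := (a2 + sg s * b1 + sg t * c1 + - (sg s * sg t * d2))) in *.
  nra.
Qed.

Lemma pow_strict r a k : 0 < r -> r < a -> r ^ S k < a ^ S k.
Proof.
  intros Hr Ha. simpl.
  assert (r ^ k <= a ^ k) by (apply pow_incr; lra).
  assert (0 < r ^ k) by (apply pow_lt; lra).
  nra.
Qed.

Theorem mainTheorem13 (p : nat) (hp : (2 <= p)%nat) :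
  forall c : M3, Mandel3 p c ->
    closedDisk3 (Rpower 2 (/ INR (p - 1))) (Rpower 2 (/ INR (p - 1))) c.
Proof.
  intros c [B HB].
  set (r := Rpower 2 (/ INR (p - 1))).
  assert (Hr : 0 < r) by (unfold r, Rpower; apply exp_pos).
  assert (Hrp : r ^ (p - 1) = 2).
  { unfold r. rewrite <- Rpower_pow by (unfold Rpower; apply exp_pos).
    rewrite Rpower_mult, Rinv_l.
    - apply Rpower_1. lra.
    - apply not_0_INR. lia. }
  assert (Key : forall s t, Csq (phi s t c) <= r ^ 2).
  { intros s t.
    assert (HC : Cmod (phi s t c) <= r).
    { destruct (Rle_lt_dec (Cmod (phi s t c)) r) as [H|H]; [exact H|].
      exfalso.
      assert (H2 : 2 < Cmod (phi s t c) ^ (p - 1)).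
      { rewrite <- Hrp. destruct (p - 1)%nat eqn:E; [lia|].
        apply pow_strict; assumption. }
      destruct (escape p (phi s t c) hp H2 (2 * B)) as [m [Hm Hlt]].
      rewrite <- phi_iter in Hlt.
      assert (H3 := phi_bound s t (Qiter p c m)).
      specialize (HB m Hm). lra. }
    assert (0 <= Cmod (phi s t c)) by apply Cmod_ge_0.
    assert (E : Csq (phi s t c) = Cmod (phi s t c) ^ 2).
    { unfold Cmod. rewrite pow2_sqrt. reflexivity.
      unfold Csq. nra. }
    rewrite E. apply pow_incr. lra. }
  assert (K1 := Key true true). assert (K2 := Key true false).
  assert (K3 := Key false true). assert (K4 := Key false false).
  clearbody r.
  destruct c as [[[a1 a2][b1 b2]][[c1 c2][d1 d2]]].
  unfold phi, Csq, sg in K1, K2, K3, K4; simpl in K1, K2, K3, K4.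
  exists ((a1 + d1, a2 + d2), (b1 - c1, b2 - c2)).
  exists ((a1 - d1, a2 - d2), (b1 + c1, b2 + c2)).
  split; [|split].
  - unfold norm2. rewrite <- (sqrt_pow2 r) by lra. apply sqrt_le_1_alt.
    unfold M2sq, Csq; simpl. nra.
  - unfold norm2. rewrite <- (sqrt_pow2 r) by lra. apply sqrt_le_1_alt.
    unfold M2sq, Csq; simpl. nra.
  - unfold M3add, M3mul, M2toM3, gamma2, gamma2bar, half, M3one, j3, i2_M2,
      M2add, M2mul, M2opp, M2one, M2zero, Cadd, Cmul, Copp, C0, C1; simpl.
    repeat match goal with |- (_, _) = (_, _) => f_equal end; field.
Qed.
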